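(* Let $\varepsilon>0$ and let $\tau\in F_2$ with $\operatorname{Im}\tau_{12}\ge\varepsilon$ and $\operatorname{Im}\tau_1\ge\max\{1/\varepsilon,31\}$. Let $a=(\tfrac12,\tfrac12)$ and $b=(0,0)$ or $b=(\tfrac12,\tfrac12)$. Then $$|\theta_{a,b}(0,\tau)|\,e^{\pi\,{}^ta\operatorname{Im}\tau\,a}\ge\min\{\varepsilon/2,\ 0{,}31\}.$$
   Context: $F_2$ is the standard Siegel fundamental domain for $\mathrm{Sp}_4(\mathbb{Z})$ acting on symmetric complex $2\times2$ matrices $\tau=\begin{pmatrix}\tau_1&\tau_{12}\\ \tau_{12}&\tau_2\end{pmatrix}$ with $\operatorname{Im}\tau>0$; every $\tau\in F_2$ satisfies $|\operatorname{Re}\tau_{ij}|\le 1/2$, $\operatorname{Im}\tau_2\ge\operatorname{Im}\tau_1\ge 2\operatorname{Im}\tau_{12}\ge 0$, $\operatorname{Im}\tau_1\ge\sqrt3/2$. $\theta_{a,b}(Z,\tau)=\sum_{n\in\mathbb{Z}^2}\exp\big(2i\pi(\tfrac12{}^t(n+a)\tau(n+a)+{}^t(n+a)(Z+b))\big)$. *)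

(* Defs.v *)
From Stdlib Require Import Reals Lra ZArith.
Open Scope R_scope.

Record Cx := mkCx { cre : R; cim : R }.
Definition cadd (z w : Cx) : Cx := mkCx (cre z + cre w) (cim z + cim w).
Definition csub (z w : Cx) : Cx := mkCx (cre z - cre w) (cim z - cim w).
Definition cmul (z w : Cx) : Cx :=
  mkCx (cre z * cre w - cim z * cim w) (cre z * cim w + cim z * cre w).
Definition cofR (x : R) : Cx := mkCx x 0.
Definition cnorm (z : Cx) : R := sqrt (cre z * cre z + cim z * cim z).
Definition cexp (z : Cx) : Cx :=
  mkCx (exp (cre z) * cos (cim z)) (exp (cre z) * sin (cim z)).
Definition ci : Cx := mkCx 0 1.

Record Sym2 := mkSym2 { t1 : Cx; t12 : Cx; t2 : Cx }.
Definition tau_entry (t : Sym2) (i j : nat) : Cx :=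
  match i, j with
  | 1%nat, 1%nat => t1 t
  | 2%nat, 2%nat => t2 t
  | _, _ => t12 t
  end.

(* Siegel upper half space H_2: Im tau positive definite *)
Definition in_H2 (t : Sym2) : Prop :=
  0 < cim (t1 t) /\ cim (t1 t) * cim (t2 t) - cim (t12 t) * cim (t12 t) > 0.

Record Zmat2 := mkZmat2 { m11 : Z; m12 : Z; m21 : Z; m22 : Z }.
Definition zentry (M : Zmat2) (i j : nat) : Z :=
  match i, j with
  | 1%nat, 1%nat => m11 M | 1%nat, _ => m12 M
  | _, 1%nat => m21 M | _, _ => m22 M
  end.
Definition ztr (M : Zmat2) : Zmat2 := mkZmat2 (m11 M) (m21 M) (m12 M) (m22 M).
Definition zmul (M N : Zmat2) : Zmat2 :=
  mkZmat2 (m11 M * m11 N + m12 M * m21 N)%Z (m11 M * m12 N + m12 M * m22 N)%Z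
          (m21 M * m11 N + m22 M * m21 N)%Z (m21 M * m12 N + m22 M * m22 N)%Z.
Definition zsub (M N : Zmat2) : Zmat2 :=
  mkZmat2 (m11 M - m11 N)%Z (m12 M - m12 N)%Z (m21 M - m21 N)%Z (m22 M - m22 N)%Z.
Definition zid : Zmat2 := mkZmat2 1 0 0 1.

(* M = [[A,B],[C,D]] is in Sp_4(Z), i.e. M^T J M = J with J = [[0,I],[-I,0]],
   written out blockwise:  A^T C = C^T A,  B^T D = D^T B,  A^T D - C^T B = I. *)
Definition symplecticZ (A B C D : Zmat2) : Prop :=
  zmul (ztr A) C = zmul (ztr C) A /\
  zmul (ztr B) D = zmul (ztr D) B /\
  zsub (zmul (ztr A) D) (zmul (ztr C) B) = zid.

Definition CtauD_entry (C D : Zmat2) (t : Sym2) (i j : nat) : Cx :=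
  cadd (cadd (cmul (cofR (IZR (zentry C i 1))) (tau_entry t 1 j))
             (cmul (cofR (IZR (zentry C i 2))) (tau_entry t 2 j)))
       (cofR (IZR (zentry D i j))).
Definition det_CtauD (C D : Zmat2) (t : Sym2) : Cx :=
  csub (cmul (CtauD_entry C D t 1 1) (CtauD_entry C D t 2 2))
       (cmul (CtauD_entry C D t 1 2) (CtauD_entry C D t 2 1)).

Definition in_F2 (t : Sym2) : Prop :=
  in_H2 t /\
  (forall A B C D : Zmat2, symplecticZ A B C D -> cnorm (det_CtauD C D t) >= 1) /\
  (* Im tau Minkowski reduced *)
  (0 <= 2 * cim (t12 t) /\ 2 * cim (t12 t) <= cim (t1 t) /\ cim (t1 t) <= cim (t2 t)) /\
  (Rabs (cre (t1 t)) <= 1/2 /\ Rabs (cre (t12 t)) <= 1/2 /\ Rabs (cre (t2 t)) <= 1/2).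

(* summand of theta_{a,b}(Z,tau) at n = (n1,n2):
   exp(2 i pi ( 1/2 (n+a)^T tau (n+a) + (n+a)^T (Z + b) )) *)
Definition theta_term (a1 a2 b1 b2 : R) (z1 z2 : Cx) (t : Sym2) (n1 n2 : Z) : Cx :=
  let v1 := IZR n1 + a1 in
  let v2 := IZR n2 + a2 in
  let quad := cadd (cadd (cmul (cofR (v1 * v1)) (t1 t))
                         (cmul (cofR (2 * v1 * v2)) (t12 t)))
                   (cmul (cofR (v2 * v2)) (t2 t)) in
  let lin := cadd (cmul (cofR v1) (cadd z1 (cofR b1)))
                  (cmul (cofR v2) (cadd z2 (cofR b2))) in
  cexp (cmul (cmul (cofR (2 * PI)) ci) (cadd (cmul (cofR (1/2)) quad) lin)).

Fixpoint csum (f : nat -> Cx) (m : nat) : Cx :=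
  match m with
  | O => cofR 0
  | S m' => cadd (csum f m') (f m')
  end.

(* partial sum over the square  -N <= n1, n2 <= N *)
Definition theta_partial (a1 a2 b1 b2 : R) (z1 z2 : Cx) (t : Sym2) (N : nat) : Cx :=
  csum (fun i => csum (fun j =>
          theta_term a1 a2 b1 b2 z1 z2 t (Z.of_nat i - Z.of_nat N)%Z (Z.of_nat j - Z.of_nat N)%Z)
        (2 * N + 1)) (2 * N + 1).

(* l is the value of theta_{a,b}(Z,tau): limit of the symmetric square partial sums
   (the series converges absolutely on H_2, so this is its sum). *)
Definition theta_value (a1 a2 b1 b2 : R) (z1 z2 : Cx) (t : Sym2) (l : Cx) : Prop :=
  Un_cv (fun N => cre (theta_partial a1 a2 b1 b2 z1 z2 t N)) (cre l) /\
  Un_cv (fun N => cim (theta_partial a1 a2 b1 b2 z1 z2 t N)) (cim l).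

(* Main.v *)
Require Import Defs.
From Stdlib Require Import Reals Lra Lia Psatz ZArith.
Open Scope R_scope.

Fixpoint rsum (f : nat -> R) (m : nat) : R :=
  match m with O => 0 | S m' => rsum f m' + f m' end.

Lemma rsum_ext f g m : (forall k, (k < m)%nat -> f k = g k) -> rsum f m = rsum g m.
Proof. induction m; intros H; simpl; auto. rewrite IHm by (intros; apply H; lia). rewrite (H m) by lia. auto. Qed.

Lemma rsum_le f g m : (forall k, (k < m)%nat -> f k <= g k) -> rsum f m <= rsum g m.
Proof. induction m; intros H; simpl. lra. assert (rsum f m <= rsum g m) by (apply IHm; intros; apply H; lia). specialize (H m ltac:(lia)). lra. Qed.

Lemma rsum_nonneg f m : (forall k, 0 <= f k) -> 0 <= rsum f m.
Proof. induction m; intros H; simpl. lra. specialize (IHm H). specialize (H m). lra. Qed.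

Lemma rsum_ge1 f m k0 : (forall k, 0 <= f k) -> (k0 < m)%nat -> f k0 <= rsum f m.
Proof. induction m; intros H Hk; simpl. lia. destruct (Nat.eq_dec k0 m). subst. pose proof (rsum_nonneg f m H). lra.
  assert (f k0 <= rsum f m) by (apply IHm; auto; lia). specialize (H m). lra. Qed.

Lemma rsum_ge2 f m k0 k1 : (forall k, 0 <= f k) -> (k0 < m)%nat -> (k1 < m)%nat -> k0 <> k1 -> f k0 + f k1 <= rsum f m.
Proof. induction m; intros H H0 H1 Hne; simpl. lia.
  destruct (Nat.eq_dec k0 m). subst. pose proof (rsum_ge1 f m k1 H ltac:(lia)). lra.
  destruct (Nat.eq_dec k1 m). subst. pose proof (rsum_ge1 f m k0 H ltac:(lia)). lra.
  assert (f k0 + f k1 <= rsum f m) by (apply IHm; auto; lia). specialize (H m). lra. Qed.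

Lemma rsum_lin f h c m : rsum (fun k => f k - c * h k) m = rsum f m - c * rsum h m.
Proof. induction m; simpl. ring. rewrite IHm. ring. Qed.

Lemma rsum_scal c f m : rsum (fun k => c * f k) m = c * rsum f m.
Proof. induction m; simpl. ring. rewrite IHm. ring. Qed.

Lemma sumW P M E m : rsum (fun i => rsum (fun j => P i * P j + M i * M j + E * (P i * M j + M i * P j)) m) m
  = rsum P m * rsum P m + rsum M m * rsum M m + E * (2 * (rsum P m * rsum M m)).
Proof.
  assert (Hin : forall i k, rsum (fun j => P i * P j + M i * M j + E * (P i * M j + M i * P j)) k
     = P i * rsum P k + M i * rsum M k + E * (P i * rsum M k + M i * rsum P k)).
  { intros i k; induction k; simpl. ring. rewrite IHk. ring. }
  rewrite (rsum_ext _ (fun i => P i * rsum P m + M i * rsum M m + E * (P i * rsum M m + M i * rsum P m))) by (intros; apply Hin).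
  assert (forall A B k, rsum (fun i => P i * A + M i * B + E * (P i * B + M i * A)) k = rsum P k * A + rsum M k * B + E * (rsum P k * B + rsum M k * A)).
  { induction k; simpl. ring. rewrite IHk. ring. }
  rewrite H. ring.
Qed.

Definition Pw (Q : R) (N i : nat) : R := if (N <=? i)%nat then Q ^ (i - N) else 0.
Definition Mw (Q : R) (N i : nat) : R := if (i <? N)%nat then Q ^ (N - 1 - i) else 0.

Lemma sumP_eq Q N M : Q <> 1 -> rsum (Pw Q N) M = if (N <=? M)%nat then (1 - Q ^ (M - N)) / (1 - Q) else 0.
Proof.
  intros HQ. assert (1 - Q <> 0) by lra.
  induction M.
  - simpl. destruct N; simpl. field; auto. reflexivity.
  - cbn [rsum]. rewrite IHM. unfold Pw. destruct (le_lt_dec N M).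
    + rewrite (proj2 (Nat.leb_le N M) l). rewrite (proj2 (Nat.leb_le N (S M))) by lia.
      replace (S M - N)%nat with (S (M - N)) by lia. set (k := (M - N)%nat). simpl. field; auto.
    + rewrite (proj2 (Nat.leb_gt N M) l). destruct (Nat.eq_dec N (S M)).
      * subst. rewrite Nat.leb_refl. rewrite Nat.sub_diag. simpl. field; auto.
      * rewrite (proj2 (Nat.leb_gt N (S M))) by lia. ring.
Qed.

Lemma sumM_eq Q N M : Q <> 1 -> rsum (Mw Q N) M = if (M <=? N)%nat then (Q ^ (N - M) - Q ^ N) / (1 - Q) else (1 - Q ^ N) / (1 - Q).
Proof.
  intros HQ. assert (1 - Q <> 0) by lra.
  induction M.
  - simpl. rewrite Nat.sub_0_r. field; auto.
  - cbn [rsum]. rewrite IHM. unfold Mw. destruct (le_lt_dec N M).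
    + rewrite (proj2 (Nat.ltb_ge M N) l). rewrite (proj2 (Nat.leb_gt (S M) N)) by lia.
      destruct (Nat.eq_dec M N).
      * subst. rewrite Nat.leb_refl, Nat.sub_diag. simpl. ring.
      * rewrite (proj2 (Nat.leb_gt M N)) by lia. ring.
    + rewrite (proj2 (Nat.ltb_lt M N) l). rewrite (proj2 (Nat.leb_le M N)) by lia.
      rewrite (proj2 (Nat.leb_le (S M) N)) by lia.
      replace (N - M)%nat with (S (N - S M)) by lia. replace (N - 1 - M)%nat with (N - S M)%nat by lia.
      set (k := (N - S M)%nat). simpl. field; auto.
Qed.

Lemma pow_le1 Q k : 0 <= Q <= 1 -> Q ^ k <= 1.
Proof. intros H. induction k; simpl. lra. pose proof (pow_le Q k (proj1 H)). nra. Qed.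

Lemma sumP_bd Q N M : 0 <= Q < 1 -> 0 <= rsum (Pw Q N) M <= 1 / (1 - Q).
Proof.
  intros H. rewrite sumP_eq by lra. assert (0 < 1 - Q) by lra.
  destruct (N <=? M)%nat.
  - pose proof (pow_le Q (M - N) (proj1 H)). pose proof (pow_le1 Q (M-N) ltac:(lra)).
    unfold Rdiv. split; apply Rmult_le_compat_r || apply Rmult_le_pos; try (left; apply Rinv_0_lt_compat); lra.
  - split. lra. unfold Rdiv. apply Rmult_le_pos. lra. left; apply Rinv_0_lt_compat; lra.
Qed.

Lemma sumM_bd Q N M : 0 <= Q < 1 -> 0 <= rsum (Mw Q N) M <= 1 / (1 - Q).
Proof.
  intros H. rewrite sumM_eq by lra. assert (0 < 1 - Q) by lra.
  assert (0 < / (1 - Q)) by (apply Rinv_0_lt_compat; lra).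
  pose proof (pow_le Q N (proj1 H)). pose proof (pow_le1 Q N ltac:(lra)).
  destruct (M <=? N)%nat eqn:Heq.
  - pose proof (pow_le Q (N - M) (proj1 H)). pose proof (pow_le1 Q (N-M) ltac:(lra)).
    assert (Q ^ N <= Q ^ (N - M)).
    { replace N with ((N - M) + M)%nat at 1 by (apply Nat.leb_le in Heq; lia). rewrite pow_add.
      pose proof (pow_le1 Q M ltac:(lra)). pose proof (pow_le Q M (proj1 H)). nra. }
    unfold Rdiv. split; nra.
  - unfold Rdiv. split; nra.
Qed.

Definition rdot (u z : Cx) : R := cre u * cre z + cim u * cim z.

Lemma rdot_csum u f m : rdot u (csum f m) = rsum (fun k => rdot u (f k)) m.
Proof. induction m; simpl; unfold rdot in *; simpl. ring. rewrite <- IHm. ring. Qed.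

Lemma cnorm_nonneg z : 0 <= cnorm z.
Proof. unfold cnorm. apply sqrt_pos. Qed.

Lemma rdot_self u : rdot u u = cnorm u * cnorm u.
Proof. unfold rdot, cnorm. rewrite sqrt_sqrt. ring. nra. Qed.

Lemma rdot_abs u z : Rabs (rdot u z) <= cnorm u * cnorm z.
Proof.
  unfold cnorm. rewrite <- sqrt_mult_alt; [| destruct u as [a b]; simpl; nra]. rewrite <- sqrt_Rsqr_abs.
  apply sqrt_le_1_alt. unfold rdot, Rsqr.
  destruct u as [a b]; destruct z as [c d]; simpl. pose proof (Rle_0_sqr (a*d - b*c)). unfold Rsqr in *. nra.
Qed.

Lemma rdot_le u z : rdot u z <= cnorm u * cnorm z.
Proof. pose proof (rdot_abs u z). pose proof (Rle_abs (rdot u z)). lra. Qed.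

Lemma rdot_ge u z : - (cnorm u * cnorm z) <= rdot u z.
Proof. pose proof (rdot_abs u z). pose proof (Rle_abs (- rdot u z)). rewrite Rabs_Ropp in H0. lra. Qed.

Lemma cnorm_cexp z : cnorm (cexp z) = exp (cre z).
Proof.
  unfold cnorm, cexp; simpl. pose proof (sin2_cos2 (cim z)). unfold Rsqr in H.
  replace (exp (cre z) * cos (cim z) * (exp (cre z) * cos (cim z)) +
   exp (cre z) * sin (cim z) * (exp (cre z) * sin (cim z))) with (exp (cre z) * exp (cre z))
   by (transitivity (exp (cre z) * exp (cre z) * (sin (cim z) * sin (cim z) + cos (cim z) * cos (cim z))); [rewrite H; ring | ring]).
  apply sqrt_square. left; apply exp_pos.
Qed.

Lemma cnorm_tt a1 a2 b1 b2 t n1 n2 :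
  cnorm (theta_term a1 a2 b1 b2 (cofR 0) (cofR 0) t n1 n2) =
  exp (- (PI * ((IZR n1 + a1) * (IZR n1 + a1) * cim (t1 t) + 2 * (IZR n1 + a1) * (IZR n2 + a2) * cim (t12 t)
                + (IZR n2 + a2) * (IZR n2 + a2) * cim (t2 t)))).
Proof.
  unfold theta_term. rewrite cnorm_cexp. f_equal. unfold cmul, cadd, cofR, ci; simpl. field.
Qed.

Lemma exp_mon x y : x <= y -> exp x <= exp y.
Proof. intros [H|H]. left; apply exp_increasing; auto. subst; lra. Qed.

Lemma exp_pow_INR x k : exp x ^ k = exp (x * INR k).
Proof. induction k. simpl. rewrite Rmult_0_r, exp_0. auto.
  rewrite S_INR. simpl. rewrite IHk. rewrite <- exp_plus. f_equal. ring. Qed.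

Lemma nat_sq k : 0 <= INR k * (INR k - 1).
Proof. destruct k. simpl. lra. rewrite S_INR. pose proof (pos_INR k). nra. Qed.

Lemma idx_cases Q N i :
  (Pw Q N i = Q ^ (i - N) /\ Mw Q N i = 0 /\ IZR (Z.of_nat i - Z.of_nat N) = INR (i - N))
  \/ (Pw Q N i = 0 /\ Mw Q N i = Q ^ (N - 1 - i) /\ IZR (Z.of_nat i - Z.of_nat N) = - INR (N - 1 - i) - 1).
Proof.
  unfold Pw, Mw. destruct (le_lt_dec N i).
  - left. rewrite (proj2 (Nat.leb_le N i) l), (proj2 (Nat.ltb_ge i N) l). split; [auto|split; [auto|]].
    rewrite INR_IZR_INZ. f_equal. lia.
  - right. rewrite (proj2 (Nat.leb_gt N i) l), (proj2 (Nat.ltb_lt i N) l). split; [auto|split; [auto|]].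
    rewrite INR_IZR_INZ. rewrite <- opp_IZR, <- minus_IZR. f_equal. lia.
Qed.

Lemma poly_same y1 s y2 k1 k2 : 0 <= s -> 2*s <= y1 -> y1 <= y2 -> 0 <= k1 -> 0 <= k2 ->
  0 <= k1 * (k1 - 1) -> 0 <= k2 * (k2 - 1) ->
  (k1 + 1/2) * (k1 + 1/2) * y1 + 2 * (k1 + 1/2) * (k2 + 1/2) * s + (k2 + 1/2) * (k2 + 1/2) * y2
   - (1/2*(1/2)*y1 + 2*(1/2)*(1/2)*s + 1/2*(1/2)*y2) >= y1 * (k1 + k2).
Proof.
  intros. assert (H7 : 0 <= y1) by lra.
  pose proof (Rmult_le_pos _ _ H7 H4). pose proof (Rmult_le_pos _ _ (Rle_trans _ _ _ H7 H1) H5).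
  pose proof (Rmult_le_pos _ _ H (Rmult_le_pos _ _ H2 H3)).
  pose proof (Rmult_le_pos _ _ H H2). pose proof (Rmult_le_pos _ _ H H3).
  pose proof (Rmult_le_pos _ _ H7 H2). pose proof (Rmult_le_pos (y2 - y1) k2 ltac:(lra) H3).
  pose proof (Rmult_le_pos _ _ H7 H3).
  nra.
Qed.

Lemma poly_mixed y1 s y2 k1 k2 : 0 <= s -> 2*s <= y1 -> y1 <= y2 -> 0 <= k1 -> 0 <= k2 ->
  0 <= k1 * (k1 - 1) -> 0 <= k2 * (k2 - 1) ->
  (k1 + 1/2) * (k1 + 1/2) * y1 + 2 * (k1 + 1/2) * (- k2 - 1/2) * s + (k2 + 1/2) * (k2 + 1/2) * y2
   - (1/2*(1/2)*y1 + 2*(1/2)*(1/2)*s + 1/2*(1/2)*y2) + s >= y1 * (k1 + k2).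
Proof.
  intros. assert (H7 : 0 <= y1) by lra.
  pose proof (Rmult_le_pos _ _ H7 H4). pose proof (Rmult_le_pos _ _ H7 H5).
  pose proof (Rmult_le_pos _ _ H2 H3).
  assert (0 <= k1*k2 + (k1+k2)/2) by lra.
  assert (0 <= k2*(k2+1)) by (apply Rmult_le_pos; lra).
  pose proof (Rmult_le_pos (y1 - 2*s) (k1*k2 + (k1+k2)/2) ltac:(lra) H10).
  pose proof (Rmult_le_pos (y2 - y1) (k2*(k2+1)) ltac:(lra) H11).
  pose proof (Rmult_le_pos y1 ((k1-k2)*(k1-k2)) H7 (Rle_0_sqr _)).
  nra.
Qed.

Lemma poly_mixed' y1 s y2 k1 k2 : 0 <= s -> 2*s <= y1 -> y1 <= y2 -> 0 <= k1 -> 0 <= k2 ->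
  0 <= k1 * (k1 - 1) -> 0 <= k2 * (k2 - 1) ->
  (- k1 - 1/2) * (- k1 - 1/2) * y1 + 2 * (- k1 - 1/2) * (k2 + 1/2) * s + (k2 + 1/2) * (k2 + 1/2) * y2
   - (1/2*(1/2)*y1 + 2*(1/2)*(1/2)*s + 1/2*(1/2)*y2) + s >= y1 * (k1 + k2).
Proof.
  intros. pose proof (poly_mixed y1 s y2 k1 k2 H H0 H1 H2 H3 H4 H5). nra.
Qed.

Lemma poly_neg y1 s y2 k1 k2 : 0 <= s -> 2*s <= y1 -> y1 <= y2 -> 0 <= k1 -> 0 <= k2 ->
  0 <= k1 * (k1 - 1) -> 0 <= k2 * (k2 - 1) ->
  (- k1 - 1/2) * (- k1 - 1/2) * y1 + 2 * (- k1 - 1/2) * (- k2 - 1/2) * s + (- k2 - 1/2) * (- k2 - 1/2) * y2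
   - (1/2*(1/2)*y1 + 2*(1/2)*(1/2)*s + 1/2*(1/2)*y2) >= y1 * (k1 + k2).
Proof.
  intros. pose proof (poly_same y1 s y2 k1 k2 H H0 H1 H2 H3 H4 H5). nra.
Qed.

Lemma term_bound (y1 s y2 : R) (N i j : nat) : 0 <= s -> 2*s <= y1 -> y1 <= y2 ->
  exp (PI * ((1/2)*(1/2)*y1 + 2*(1/2)*(1/2)*s + (1/2)*(1/2)*y2)) *
  exp (- (PI * ((IZR (Z.of_nat i - Z.of_nat N) + 1/2) * (IZR (Z.of_nat i - Z.of_nat N) + 1/2) * y1
     + 2 * (IZR (Z.of_nat i - Z.of_nat N) + 1/2) * (IZR (Z.of_nat j - Z.of_nat N) + 1/2) * s
     + (IZR (Z.of_nat j - Z.of_nat N) + 1/2) * (IZR (Z.of_nat j - Z.of_nat N) + 1/2) * y2)))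
  <= Pw (exp (-(PI*y1))) N i * Pw (exp (-(PI*y1))) N j + Mw (exp (-(PI*y1))) N i * Mw (exp (-(PI*y1))) N j
     + exp (PI * s) * (Pw (exp (-(PI*y1))) N i * Mw (exp (-(PI*y1))) N j + Mw (exp (-(PI*y1))) N i * Pw (exp (-(PI*y1))) N j).
Proof.
  intros Hs Hs2 Hy. pose proof PI_RGT_0 as Hpi.
  rewrite <- exp_plus.
  destruct (idx_cases (exp (-(PI*y1))) N i) as [[P1 [M1 X1]] | [P1 [M1 X1]]];
  destruct (idx_cases (exp (-(PI*y1))) N j) as [[P2 [M2 X2]] | [P2 [M2 X2]]];
  rewrite P1, M1, P2, M2, X1, X2, ?exp_pow_INR;
  [set (k1 := INR (i - N)); set (k2 := INR (j - N))
  |set (k1 := INR (i - N)); set (k2 := INR (N - 1 - j))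
  |set (k1 := INR (N - 1 - i)); set (k2 := INR (j - N))
  |set (k1 := INR (N - 1 - i)); set (k2 := INR (N - 1 - j))];
  assert (K1 : 0 <= k1) by apply pos_INR; assert (K2 : 0 <= k2) by apply pos_INR;
  assert (K1' : 0 <= k1 * (k1 - 1)) by apply nat_sq; assert (K2' : 0 <= k2 * (k2 - 1)) by apply nat_sq.
  - pose proof (poly_same y1 s y2 k1 k2 Hs Hs2 Hy K1 K2 K1' K2').
    match goal with |- exp ?a <= _ => assert (exp a <= exp (-(PI*y1)*k1 + -(PI*y1)*k2)) by (apply exp_mon; apply Rge_le in H; apply (Rmult_le_compat_l PI) in H; lra) end.
    rewrite (exp_plus (-(PI*y1)*k1)) in H0. lra.
  - pose proof (poly_mixed y1 s y2 k1 k2 Hs Hs2 Hy K1 K2 K1' K2').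
    replace (- k2 - 1 + 1/2) with (- k2 - 1/2) by field.
    match goal with |- exp ?a <= _ => assert (exp a <= exp (PI * s + (-(PI*y1)*k1 + -(PI*y1)*k2))) by (apply exp_mon; apply Rge_le in H; apply (Rmult_le_compat_l PI) in H; lra) end.
    rewrite (exp_plus (PI*s)), (exp_plus (-(PI*y1)*k1)) in H0. lra.
  - pose proof (poly_mixed' y1 s y2 k1 k2 Hs Hs2 Hy K1 K2 K1' K2').
    replace (- k1 - 1 + 1/2) with (- k1 - 1/2) by field.
    match goal with |- exp ?a <= _ => assert (exp a <= exp (PI * s + (-(PI*y1)*k1 + -(PI*y1)*k2))) by (apply exp_mon; apply Rge_le in H; apply (Rmult_le_compat_l PI) in H; lra) end.
    rewrite (exp_plus (PI*s)), (exp_plus (-(PI*y1)*k1)) in H0. lra.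
  - pose proof (poly_neg y1 s y2 k1 k2 Hs Hs2 Hy K1 K2 K1' K2').
    replace (- k1 - 1 + 1/2) with (- k1 - 1/2) by field.
    replace (- k2 - 1 + 1/2) with (- k2 - 1/2) by field.
    match goal with |- exp ?a <= _ => assert (exp a <= exp (-(PI*y1)*k1 + -(PI*y1)*k2)) by (apply exp_mon; apply Rge_le in H; apply (Rmult_le_compat_l PI) in H; lra) end.
    rewrite (exp_plus (-(PI*y1)*k1)) in H0. lra.
Qed.

Lemma final_ineq eps y1 s SP SM : 0 < eps -> s >= eps -> 2*s <= y1 -> y1 >= Rmax (1/eps) 31 ->
  0 <= SP <= 1/(1 - exp(-(PI*y1))) -> 0 <= SM <= 1/(1 - exp(-(PI*y1))) ->
  4*exp(PI*s) - (SP*SP + SM*SM + exp(PI*s)*(2*(SP*SM))) >= Rmin (eps/2) (31/100).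
Proof.
  intros He Hs Hs2 Hy HP HM.
  assert (Hpi : PI > 3) by (pose proof PI2_3_2; lra).
  assert (Hy31 : y1 >= 31) by (pose proof (Rmax_r (1/eps) 31); lra).
  assert (Hye : y1 * eps >= 1).
  { pose proof (Rmax_l (1/eps) 31). assert (y1 >= 1/eps) by lra.
    apply Rge_le in H0. apply (Rmult_le_compat_r eps) in H0; [|lra]. unfold Rdiv in H0.
    rewrite Rmult_1_l, Rinv_l in H0 by lra. lra. }
  set (X := exp (PI*y1/4)).
  assert (HX : X >= 1 + PI*y1/4) by (pose proof (exp_ineq1_le (PI*y1/4)); unfold X; lra).
  set (w := exp (-(PI*y1/2))).
  assert (Hw1 : w * (X * X) = 1).
  { unfold w, X. rewrite <- !exp_plus. replace (- (PI * y1 / 2) + (PI * y1 / 4 + PI * y1 / 4)) with 0 by field. apply exp_0. }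
  assert (Hw0 : 0 < w) by apply exp_pos.
  assert (HX24 : X >= 24) by nra.
  assert (HXX : X * X >= 18 * y1) by nra.
  assert (Hweps : w * 18 <= eps) by nra.
  assert (Hwsmall : w * 576 <= 1) by nra.
  set (Q := exp (-(PI*y1))) in *.
  assert (HQ0 : 0 < Q) by apply exp_pos.
  assert (HQw : Q <= w) by (apply exp_mon; nra).
  set (E := exp (PI*s)).
  assert (HE : E >= 1 + PI*s) by (pose proof (exp_ineq1_le (PI*s)); unfold E; lra).
  assert (HEQ : E * Q <= w).
  { unfold E, Q, w. rewrite <- exp_plus. apply exp_mon. pose proof (Rmult_le_pos PI (y1 - 2*s) ltac:(lra) ltac:(lra)). lra. }
  set (B := 1 / (1 - Q)) in *.
  assert (HB1 : B * (1 - Q) = 1) by (unfold B; field; lra).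
  assert (HB0 : 0 <= B) by (unfold B, Rdiv; rewrite Rmult_1_l; left; apply Rinv_0_lt_compat; lra).
  assert (HB2 : B <= 2) by nra.
  assert (HBB : B * B <= 1 + 3 * Q) by nra.
  assert (HS : SP*SP + SM*SM + E*(2*(SP*SM)) <= B*B*(2 + 2*E)).
  { assert (SP*SP <= B*B) by nra. assert (SM*SM <= B*B) by nra. assert (SP*SM <= B*B) by nra.
    assert (0 <= E) by (unfold E; left; apply exp_pos). nra. }
  assert (0 <= E) by (unfold E; left; apply exp_pos).
  assert (B*B*(2+2*E) <= (1+3*Q)*(2+2*E)) by nra.
  pose proof (Rmin_l (eps/2) (31/100)). nra.
Qed.

Lemma lim_ge (u : nat -> R) l c : Un_cv u l -> (forall n, (n >= 1)%nat -> u n >= c) -> l >= c.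
Proof.
  intros Hu Hn. destruct (Rge_dec l c) as [|Hlt]; auto. exfalso.
  assert (c - l > 0) by lra. destruct (Hu (c - l) H) as [N HN].
  specialize (HN (max N 1) ltac:(lia)). specialize (Hn (max N 1) ltac:(lia)).
  unfold Rdist in HN. apply Rabs_def2 in HN. lra.
Qed.

Lemma swap_dom b t : theta_term (1/2) (1/2) b b (cofR 0) (cofR 0) t (-1) 0 =
                     theta_term (1/2) (1/2) b b (cofR 0) (cofR 0) t 0 (-1).
Proof.
  unfold theta_term. f_equal. unfold cmul, cadd, cofR, ci; simpl. f_equal; field.
Qed.

Lemma partial_bound eps t b N : 0 < eps -> in_F2 t -> cim (t12 t) >= eps ->
  cim (t1 t) >= Rmax (1 / eps) 31 -> (N >= 1)%nat ->
  exp (PI * ((1/2) * (1/2) * cim (t1 t) + 2 * (1/2) * (1/2) * cim (t12 t)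
               + (1/2) * (1/2) * cim (t2 t))) *
  cnorm (theta_partial (1/2) (1/2) b b (cofR 0) (cofR 0) t N) >= Rmin (eps / 2) (31 / 100).
Proof.
  intros He HF Hs Hy HN.
  destruct HF as [_ [_ [[Hs0 [Hs2 Hy2]] _]]].
  set (T := fun i j : nat => theta_term (1/2) (1/2) b b (cofR 0) (cofR 0) t
             (Z.of_nat i - Z.of_nat N) (Z.of_nat j - Z.of_nat N)).
  set (m := (2 * N + 1)%nat).
  change (theta_partial (1/2) (1/2) b b (cofR 0) (cofR 0) t N) with
    (csum (fun i => csum (fun j => T i j) m) m).
  set (S := csum (fun i => csum (fun j => T i j) m) m).
  set (u := T N (N - 1)%nat).
  assert (Hu : u = theta_term (1/2) (1/2) b b (cofR 0) (cofR 0) t 0 (-1)).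
  { unfold u, T. f_equal; lia. }
  assert (Hu2 : T (N - 1)%nat N = u).
  { rewrite Hu. unfold T. rewrite <- swap_dom. f_equal; lia. }
  set (K := exp (PI * ((1/2) * (1/2) * cim (t1 t) + 2 * (1/2) * (1/2) * cim (t12 t)
               + (1/2) * (1/2) * cim (t2 t)))).
  set (nu := cnorm u).
  assert (HKnu : K * nu = exp (PI * cim (t12 t))).
  { unfold nu, K. rewrite Hu, cnorm_tt, <- exp_plus. f_equal. simpl. field. }
  assert (Hnu : 0 < nu).
  { unfold nu. rewrite Hu, cnorm_tt. apply exp_pos. }
  assert (HK : 0 < K) by apply exp_pos.
  set (TT := rsum (fun i => rsum (fun j => cnorm (T i j)) m) m).
  assert (Hdot : rdot u S = rsum (fun i => rsum (fun j => rdot u (T i j) + nu * cnorm (T i j)) m) m - nu * TT).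
  { unfold S. rewrite rdot_csum. unfold TT.
    rewrite <- (rsum_lin (fun i => rsum (fun j => rdot u (T i j) + nu * cnorm (T i j)) m) (fun i => rsum (fun j => cnorm (T i j)) m) nu m).
    apply rsum_ext; intros i _. rewrite rdot_csum.
    rewrite <- (rsum_lin (fun j => rdot u (T i j) + nu * cnorm (T i j)) (fun j => cnorm (T i j)) nu m).
    apply rsum_ext; intros; ring. }
  assert (Hg : forall i j, 0 <= rdot u (T i j) + nu * cnorm (T i j)).
  { intros. pose proof (rdot_ge u (T i j)). unfold nu. lra. }
  assert (HG : 4 * (nu * nu) <= rsum (fun i => rsum (fun j => rdot u (T i j) + nu * cnorm (T i j)) m) m).
  { eapply Rle_trans; [| apply (rsum_ge2 _ m N (N - 1)%nat); [intros; apply rsum_nonneg; auto | unfold m; lia | unfold m; lia | lia]].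
    pose proof (rsum_ge1 (fun j => rdot u (T N j) + nu * cnorm (T N j)) m (N - 1)%nat (Hg N) ltac:(unfold m; lia)).
    pose proof (rsum_ge1 (fun j => rdot u (T (N - 1)%nat j) + nu * cnorm (T (N - 1)%nat j)) m N (Hg (N - 1)%nat) ltac:(unfold m; lia)).
    simpl in H, H0. rewrite Hu2 in H0. fold u in H. rewrite rdot_self in H, H0. fold nu in H, H0. lra. }
  assert (HS : nu * cnorm S >= 4 * (nu * nu) - nu * TT).
  { pose proof (rdot_le u S). fold nu in H. lra. }
  assert (HS2 : cnorm S >= 4 * nu - TT).
  { apply Rge_le in HS. apply Rle_ge. apply (Rmult_le_reg_l nu); auto. lra. }
  set (Q := exp (-(PI * cim (t1 t)))).
  assert (HKT : K * TT <= rsum (fun i => rsum (fun j => Pw Q N i * Pw Q N j + Mw Q N i * Mw Q N j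
                 + exp (PI * cim (t12 t)) * (Pw Q N i * Mw Q N j + Mw Q N i * Pw Q N j)) m) m).
  { unfold TT. rewrite <- rsum_scal. apply rsum_le. intros i _. rewrite <- rsum_scal. apply rsum_le.
    intros j _. unfold T, K. rewrite cnorm_tt. apply term_bound; lra. }
  rewrite sumW in HKT.
  assert (HQ : 0 <= Q < 1).
  { split. left; apply exp_pos. rewrite <- exp_0. apply exp_increasing.
    pose proof PI_RGT_0. pose proof (Rmax_r (1/eps) 31). nra. }
  pose proof (final_ineq eps (cim (t1 t)) (cim (t12 t)) (rsum (Pw Q N) m) (rsum (Mw Q N) m) He Hs Hs2 Hy
     (sumP_bd Q N m HQ) (sumM_bd Q N m HQ)).
  fold Q in H.
  assert (K * cnorm S >= K * (4 * nu - TT)) by (apply Rle_ge, Rmult_le_compat_l; lra).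
  lra.
Qed.

Theorem mainTheorem15 (eps : R) (t : Sym2) (b1 b2 : R) (th : Cx) :
  0 < eps ->
  in_F2 t ->
  cim (t12 t) >= eps ->
  cim (t1 t) >= Rmax (1 / eps) 31 ->
  ((b1 = 0 /\ b2 = 0) \/ (b1 = 1/2 /\ b2 = 1/2)) ->
  theta_value (1/2) (1/2) b1 b2 (cofR 0) (cofR 0) t th ->
  cnorm th *
    exp (PI * ((1/2) * (1/2) * cim (t1 t) + 2 * (1/2) * (1/2) * cim (t12 t)
               + (1/2) * (1/2) * cim (t2 t)))
  >= Rmin (eps / 2) (31 / 100).
Proof.
  intros He HF Hs Hy Hb [Hre Him].
  assert (Hbb : b2 = b1) by (destruct Hb as [[-> ->]|[-> ->]]; auto). subst b2.
  set (K := exp (PI * ((1/2) * (1/2) * cim (t1 t) + 2 * (1/2) * (1/2) * cim (t12 t)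
               + (1/2) * (1/2) * cim (t2 t)))) in *.
  set (c := Rmin (eps / 2) (31 / 100)).
  assert (Hc : 0 < c) by (apply Rmin_glb_lt; lra).
  assert (HK : 0 < K) by apply exp_pos.
  set (Sq := fun N => theta_partial (1/2) (1/2) b1 b1 (cofR 0) (cofR 0) t N) in *.
  assert (Hlim : Un_cv (fun N => cre (Sq N) * cre (Sq N) + cim (Sq N) * cim (Sq N))
                       (cre th * cre th + cim th * cim th)).
  { apply CV_plus; apply CV_mult; auto. }
  assert (Hge : cre th * cre th + cim th * cim th >= (c / K) * (c / K)).
  { apply (lim_ge _ _ _ Hlim). intros N HN.
    pose proof (partial_bound eps t b1 N He HF Hs Hy HN). fold K c in H.
    change (theta_partial (1/2) (1/2) b1 b1 (cofR 0) (cofR 0) t N) with (Sq N) in H.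
    assert (cnorm (Sq N) >= c / K).
    { apply Rle_ge. apply (Rmult_le_reg_l K); auto. unfold Rdiv. rewrite <- Rmult_assoc, (Rmult_comm K c), Rmult_assoc, Rinv_r by lra. lra. }
    assert (0 <= c / K) by (unfold Rdiv; apply Rmult_le_pos; [lra | left; apply Rinv_0_lt_compat; lra]).
    unfold cnorm in H0. pose proof (sqrt_pos (cre (Sq N) * cre (Sq N) + cim (Sq N) * cim (Sq N))).
    rewrite <- (sqrt_sqrt (cre (Sq N) * cre (Sq N) + cim (Sq N) * cim (Sq N))) by nra. nra. }
  assert (0 <= c / K) by (unfold Rdiv; apply Rmult_le_pos; [lra | left; apply Rinv_0_lt_compat; lra]).
  assert (cnorm th >= c / K).
  { unfold cnorm. rewrite <- (sqrt_square (c / K)) by auto. apply Rle_ge, sqrt_le_1_alt. lra. }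
  apply Rge_le in H0. apply (Rmult_le_compat_r K) in H0; [|lra].
  unfold Rdiv in H0. rewrite Rmult_assoc, Rinv_l, Rmult_1_r in H0 by lra. lra.
Qed.
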